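(* Let $\sigma\in\mathbb R^{d}$ with $\sigma\ne0$, $\bar r_X\ge0$, and $0\le\underline c\le\bar c\le1$ with $\underline c<1$. For $r_X,c\in\mathbb R^d$ with $r_X'c\neq-1$ let $z_X(r_X,c)=\dfrac{r_X'\sigma\sqrt{1-\|c\|^2}}{1+r_X'c}$. Then $$\sup\{|z_X(r_X,c)|:\|r_X\|\le\bar r_X,\ \|c\|\in[\underline c,\bar c],\ \|c\|\ne1,\ r_X'c\ne-1\}=\bar z_X(\bar r_X,\underline c,\bar c),$$ where, with $m=\max\{\min\{\bar r_X,\bar c\},\underline c\}$, $\bar z_X(\bar r_X,\underline c,\bar c)=\dfrac{\bar r_X\|\sigma\|\sqrt{1-m^2}}{1-\bar r_Xm}$ if $\bar r_X\bar c<1$ and $\bar z_X(\bar r_X,\underline c,\bar c)=+\infty$ if $\bar r_X\bar c\ge1$.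
   Context: $\|\cdot\|$ is the Euclidean norm. *)

(* Defs.v *)
From HB Require Import structures.
From mathcomp Require Import all_boot all_order all_algebra.
From mathcomp Require Import all_classical all_reals all_analysis.
Set Implicit Arguments. Unset Strict Implicit. Unset Printing Implicit Defensive.
Import Order.TTheory GRing.Theory Num.Theory.
Local Open Scope ring_scope.

Definition dotv (R : realType) (d : nat) (x y : 'rV[R]_d) : R :=
  \sum_(i < d) x ord0 i * y ord0 i.

Definition enorm (R : realType) (d : nat) (x : 'rV[R]_d) : R :=
  Num.sqrt (dotv x x).

Definition zX (R : realType) (d : nat) (sigma rX c : 'rV[R]_d) : R :=
  dotv rX sigma * Num.sqrt (1 - enorm c ^+ 2) / (1 + dotv rX c).

Definition zbarX (R : realType) (d : nat) (sigma : 'rV[R]_d) (rbar cl cu : R)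
  : \bar R :=
  let m := Num.max (Num.min rbar cu) cl in
  if rbar * cu < 1 then
    ((rbar * enorm sigma * Num.sqrt (1 - m ^+ 2)) / (1 - rbar * m))%:E
  else +oo%E.

(* Main.v *)
Require Import Defs.
From HB Require Import structures.
From mathcomp Require Import all_boot all_order all_algebra.
From mathcomp Require Import all_classical all_reals all_analysis.
From mathcomp Require Import ring lra.
Import Order.TTheory GRing.Theory Num.Theory.
Set Implicit Arguments. Unset Strict Implicit.
Local Open Scope ring_scope.
Local Open Scope classical_set_scope.

Lemma dotvZl (R : realType) (d : nat) (a : R) (x y : 'rV[R]_d) :
  dotv (a *: x) y = a * dotv x y.
Proof. rewrite /dotv mulr_sumr; apply: eq_bigr => i _; rewrite mxE; ring. Qed.

Lemma dotvC (R : realType) (d : nat) (x y : 'rV[R]_d) : dotv x y = dotv y x.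
Proof. rewrite /dotv; apply: eq_bigr => i _; ring. Qed.

Lemma dotvZr (R : realType) (d : nat) (a : R) (x y : 'rV[R]_d) :
  dotv x (a *: y) = a * dotv x y.
Proof. by rewrite dotvC dotvZl dotvC. Qed.

Lemma dotv_ge0 (R : realType) (d : nat) (x : 'rV[R]_d) : 0 <= dotv x x.
Proof. rewrite /dotv; apply: sumr_ge0 => i _; exact: mulr_ge0_le0 || nra. Qed.

Lemma enorm_ge0 (R : realType) (d : nat) (x : 'rV[R]_d) : 0 <= enorm x.
Proof. exact: sqrtr_ge0. Qed.

Lemma enorm_sq (R : realType) (d : nat) (x : 'rV[R]_d) : enorm x ^+ 2 = dotv x x.
Proof. by rewrite /enorm sqr_sqrtr // dotv_ge0. Qed.

Lemma enormZ (R : realType) (d : nat) (a : R) (x : 'rV[R]_d) :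
  enorm (a *: x) = `|a| * enorm x.
Proof.
rewrite /enorm dotvZl dotvZr mulrA -expr2 sqrtrM ?sqrtr_sqr //; exact: sqr_ge0.
Qed.

Lemma dotv_sub_sq (R : realType) (d : nat) (x y : 'rV[R]_d) (l : R) :
  dotv (x - l *: y) (x - l *: y) = dotv x x - 2 * l * dotv x y + l ^+ 2 * dotv y y.
Proof.
rewrite /dotv !mulr_sumr -sumrB -big_split /=; apply: eq_bigr => i _.
rewrite !mxE; ring.
Qed.

Lemma CS_sq (R : realType) (d : nat) (x y : 'rV[R]_d) :
  dotv x y ^+ 2 <= dotv x x * dotv y y.
Proof.
have q l := dotv_sub_sq x y l.
have qge l : 0 <= dotv x x - 2 * l * dotv x y + l ^+ 2 * dotv y y
  by rewrite -q dotv_ge0.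
have A0 := dotv_ge0 x; have C0 := dotv_ge0 y.
set A := dotv x x in qge A0 *; set B := dotv x y in qge *; set C := dotv y y in qge C0 *.
have [C0'|Cpos] := eqVneq C 0.
  have [->|Bn0] := eqVneq B 0; first by rewrite expr0n /= mulr_ge0.
  exfalso. pose l := (A + 1) / (2 * B).
  have e : l * B * 2 = A + 1 by rewrite /l; field; rewrite Bn0.
  have := qge l; rewrite C0'; lra.
have Cp : 0 < C by rewrite lt_def Cpos C0.
pose l := B / C.
have e : B = l * C by rewrite /l divfK.
have h := qge l; rewrite e in h *.
have h2 := mulr_ge0 (ltW Cp) h. nra.
Qed.

Lemma CS (R : realType) (d : nat) (x y : 'rV[R]_d) :
  `|dotv x y| <= enorm x * enorm y.
Proof.
rewrite /enorm -sqrtrM ?dotv_ge0 // -sqrtr_sqr ler_sqrt ?CS_sq //.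
exact: mulr_ge0 (dotv_ge0 _) (dotv_ge0 _).
Qed.

Lemma clamp_facts (R : realType) (a l u : R) : l <= u ->
  let m := Num.max (Num.min a u) l in
  [/\ l <= m, m <= u, (m = l \/ (m <= a /\ m <= u)) &
      forall t, l <= t -> t <= u -> 0 <= (t - m) * (m - a)].
Proof.
move=> lu m; rewrite /m maxEle minEle.
have fin : forall mm, (mm = l /\ a <= l) \/ (mm = a /\ l <= a <= u) \/ (mm = u /\ u <= a) ->
  [/\ l <= mm, mm <= u, (mm = l \/ (mm <= a /\ mm <= u)) &
      forall t, l <= t -> t <= u -> 0 <= (t - mm) * (mm - a)].
  move=> mm [[-> h]|[[-> /andP[h1 h2]]|[-> h]]]; (split; [lra|lra| |]);
    try (by left); try (by right; split; lra); move=> t t1 t2; nra.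
apply: fin.
case: (lerP a u) => au; case: (lerP _ l) => hl.
- by left.
- by right; left; split => //; apply/andP; split; lra.
- by right; right; split; [apply/eqP; rewrite eq_le; apply/andP; split; lra | lra].
- by right; right; split => //; lra.
Qed.

Lemma enorm_gt0 (R : realType) (d : nat) (s : 'rV[R]_d) : s != 0 -> 0 < enorm s.
Proof.
move=> sn0; rewrite /enorm sqrtr_gt0 lt_def dotv_ge0 andbT.
apply/eqP => h; move/eqP: sn0; apply; apply/rowP => i.
have hp : forall j : 'I_d, true -> 0 <= s ord0 j * s ord0 j by move=> j _; nra.
have := @psumr_eq0P _ _ _ _ hp h i isT.
move/eqP; rewrite mulf_eq0 orbb => /eqP; rewrite !mxE.
by move=> ->.
Qed.

Lemma attain (R : realType) (d : nat) (sigma : 'rV[R]_d) (rbar cl cu rho t : R) :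
  sigma != 0 -> 0 <= rho -> rho <= rbar -> cl <= t -> t <= cu -> 0 <= t -> t < 1 ->
  rho * t < 1 ->
  exists (rX c : 'rV[R]_d),
      [/\ enorm rX <= rbar, cl <= enorm c <= cu, enorm c != 1,
          dotv rX c != -1 &
          `|zX sigma rX c| = rho * enorm sigma * Num.sqrt (1 - t ^+ 2) / (1 - rho * t)].
Proof.
move=> sn0 r0 rr ct tc t0 t1 rt1.
have Np := enorm_gt0 sn0.
set N := enorm sigma in Np *.
set u := N^-1 *: sigma.
have nu : enorm u = 1 by rewrite enormZ normfV ger0_norm ?mulVf ?(ltW Np) // gt_eqF.
have duu : dotv u u = 1 by rewrite -enorm_sq nu expr1n.
have dus : dotv u sigma = N by rewrite dotvZl -enorm_sq -/N expr2 mulrA mulVf ?mul1r // gt_eqF.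
exists (rho *: u), ((- t) *: u).
have e1 : enorm (rho *: u) = rho by rewrite enormZ nu mulr1 ger0_norm.
have e2 : enorm ((- t) *: u) = t by rewrite enormZ nu mulr1 normrN ger0_norm.
have e3 : dotv (rho *: u) ((- t) *: u) = - (rho * t) by rewrite dotvZl dotvZr duu; ring.
rewrite e1 e2 e3; split => //.
- by apply/andP.
- by rewrite lt_eqF.
- by apply/eqP => h; move: rt1; rewrite -(opprK (rho * t)) h; lra.
rewrite /zX e2 e3 dotvZl dus ger0_norm //.
apply: divr_ge0; last lra.
by apply: mulr_ge0; [apply: mulr_ge0; lra | apply: sqrtr_ge0].
Qed.

Lemma ub_fin (R : realType) (d : nat) (sigma rX c : 'rV[R]_d) (rbar cl cu : R) :
  0 <= rbar -> 0 <= cl -> cl <= cu -> cu <= 1 -> cl < 1 -> rbar * cu < 1 ->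
  enorm rX <= rbar -> cl <= enorm c -> enorm c <= cu ->
  `|zX sigma rX c| <= rbar * enorm sigma * Num.sqrt (1 - (Num.max (Num.min rbar cu) cl) ^+ 2)
     / (1 - rbar * Num.max (Num.min rbar cu) cl).
Proof.
move=> a0 cl0 lu cu1 cl1 acu rXa ct tc.
have := clamp_facts rbar lu; rewrite /=.
set m := Num.max (Num.min rbar cu) cl => -[mcl mcu mcase mt].
have rho0 := enorm_ge0 rX; have t0 := enorm_ge0 c.
have N0 := enorm_ge0 sigma.
set rho := enorm rX in rho0 rXa *; set t := enorm c in t0 ct tc *.
set N := enorm sigma in N0 *; set a := rbar in a0 acu rXa mt mcase *.
have hB : `|dotv rX sigma| <= rho * N by exact: CS.
have hC : `|dotv rX c| <= rho * t by exact: CS.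
have hC' : - dotv rX c <= rho * t.
  by apply: le_trans hC; rewrite -normrN ler_norm.
have rt : rho * t <= a * cu by apply: ler_pM.
have m0 : 0 <= m by lra.
have am1 : a * m < 1.
  have h : a * m <= a * cu by apply: ler_pM; lra.
  lra.
have m1 : m < 1 by case: mcase => [->|[h1 h2]] //; nra.
have at1 : a * t < 1.
  have h : a * t <= a * cu by apply: ler_pM; lra.
  lra.
set D1 := 1 + dotv rX c.
have D1p : 1 - a * t <= D1.
  have h : rho * t <= a * t by apply: ler_pM; lra.
  rewrite /D1; lra.
have D1pos : 0 < D1 by lra.
set st := Num.sqrt (1 - t ^+ 2); set sm := Num.sqrt (1 - m ^+ 2).
have st0 : 0 <= st by exact: sqrtr_ge0.
have sm0 : 0 <= sm by exact: sqrtr_ge0.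
have key : st * (1 - a * m) <= sm * (1 - a * t).
  have h : Num.sqrt ((1 - t ^+ 2) * (1 - a * m) ^+ 2) <=
           Num.sqrt ((1 - m ^+ 2) * (1 - a * t) ^+ 2).
    rewrite ler_sqrt; last by apply: mulr_ge0; [nra | apply: sqr_ge0].
    have id : (1 - m ^+ 2) * (1 - a * t) ^+ 2 - (1 - t ^+ 2) * (1 - a * m) ^+ 2
      = (t - m) ^+ 2 * ((a - m) ^+ 2 + (1 - m ^+ 2)) + 2 * ((t - m) * (m - a)) * (1 - a * m)
      by ring.
    have h1 : 0 <= (t - m) ^+ 2 * ((a - m) ^+ 2 + (1 - m ^+ 2)).
      by apply: mulr_ge0; [apply: sqr_ge0 | apply: addr_ge0; [apply: sqr_ge0|nra]].
    have h2 : 0 <= 2 * ((t - m) * (m - a)) * (1 - a * m).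
      by apply: mulr_ge0; [apply: mulr_ge0; [lra | exact: mt] | lra].
    rewrite -subr_ge0 id; exact: addr_ge0.
  have e1 : Num.sqrt ((1 - t ^+ 2) * (1 - a * m) ^+ 2) = st * (1 - a * m).
    rewrite sqrtrM ?sqrtr_sqr ?ger0_norm //; nra.
  have e2 : Num.sqrt ((1 - m ^+ 2) * (1 - a * t) ^+ 2) = sm * (1 - a * t).
    rewrite sqrtrM ?sqrtr_sqr ?ger0_norm //; nra.
  by rewrite -e1 -e2.
rewrite /zX -/t -/st -/D1 normrM normfV normrM (ger0_norm st0) (gtr0_norm D1pos).
rewrite ler_pdivrMr //.
have hK : st <= sm / (1 - a * m) * (1 - a * t) by rewrite mulrAC ler_pdivlMr; [exact: key | lra].
have K0 : 0 <= sm / (1 - a * m) by apply: divr_ge0; lra.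
set K := sm / (1 - a * m) in hK K0.
rewrite -[a * N * sm / (1 - a * m)]mulrA -/K.
set B := `|dotv rX sigma| in hB *.
have B0 : 0 <= B by exact: normr_ge0.
have hBa : B <= a * N by apply: le_trans hB _; apply: ler_wpM2r.
have s1 : B * st <= a * N * st by apply: ler_wpM2r.
have s2 : a * N * st <= a * N * (K * (1 - a * t)) by apply: ler_wpM2l; [apply: mulr_ge0|].
have s3 : a * N * (K * (1 - a * t)) <= a * N * K * D1.
  rewrite -[a * N * K * D1]mulrA; apply: ler_wpM2l; first exact: mulr_ge0.
  by apply: ler_wpM2l.
lra.
Qed.

Lemma big_inf (R : realType) (N rbar cl cu M : R) :
  0 < N -> 0 <= rbar -> 0 <= cl -> cl <= cu -> cu <= 1 -> cl < 1 -> 1 <= rbar * cu ->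
  exists rho t : R, 0 <= rho /\ rho <= rbar /\ cl <= t /\ t <= cu /\ 0 <= t /\ t < 1 /\
     rho * t < 1 /\ M < rho * N * Num.sqrt (1 - t ^+ 2) / (1 - rho * t).
Proof.
move=> Np a0 cl0 lu cu1 cl1 acu.
pose M' := `|M| + 1.
have MM : M < M' by have := ler_norm M; rewrite /M'; lra.
have M0 : 0 < M' by rewrite /M'; have := normr_ge0 M; lra.
have [cu1'|cu1'] := ltP cu 1.
- have cu0 : 0 < cu by nra.
  have st0 : 0 < Num.sqrt (1 - cu ^+ 2) by rewrite sqrtr_gt0; nra.
  set st := Num.sqrt (1 - cu ^+ 2) in st0 *.
  pose K := N * st / cu.
  have K0 : 0 < K by rewrite /K; apply: divr_gt0 => //; apply: mulr_gt0.
  pose s := M' / (M' + K).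
  have s0 : 0 < s by rewrite /s; apply: divr_gt0 => //; lra.
  have s1 : s < 1 by rewrite /s ltr_pdivrMr; lra.
  exists (s / cu), cu.
  have rc : s / cu * cu = s by rewrite divfK // gt_eqF.
  rewrite rc; do !split => //; try lra.
  + by apply: divr_ge0; lra.
  + by rewrite ler_pdivrMr // mulrC; lra.
  have e1 : s / cu * N * st = s * K by rewrite /K; field; rewrite gt_eqF.
  have e2 : s * K = M' * (1 - s) by rewrite /s; field; rewrite gt_eqF //; lra.
  rewrite e1 e2 mulfK //; lra.
- have cue : cu = 1 by apply/eqP; rewrite eq_le; apply/andP; split.
  rewrite cue mulr1 in acu.
  pose Q := N ^+ 2 / (2 * M' ^+ 2).
  have Q0 : 0 < Q by rewrite /Q; apply: divr_gt0; [exact: exprn_gt0 | nra].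
  pose dl := Num.min (1 - cl) Q / 2.
  have [d0 d1 d2] : [/\ 0 < dl, dl <= (1 - cl) / 2 & 2 * dl <= Q].
    by rewrite /dl minEle; case: ifP => h; split; lra.
  have dQ : dl * (2 * M' ^+ 2) <= N ^+ 2 / 2.
    have h : 2 * dl * (2 * M' ^+ 2) <= Q * (2 * M' ^+ 2) by apply: ler_wpM2r => //; nra.
    rewrite /Q divfK in h; [lra | nra].
  exists 1, (1 - dl); rewrite !mul1r; do !split; try lra.
  have e : 1 - (1 - dl) = dl by ring.
  rewrite e ltr_pdivlMr //.
  apply: (@le_lt_trans _ _ (M' * dl)); first by apply: ler_wpM2r; lra.
  have h1 : M' * dl = Num.sqrt ((M' * dl) ^+ 2) by rewrite sqrtr_sqr ger0_norm //; nra.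
  have h2 : N * Num.sqrt (1 - (1 - dl) ^+ 2) = Num.sqrt (N ^+ 2 * (1 - (1 - dl) ^+ 2)).
    by rewrite sqrtrM ?sqr_ge0 // sqrtr_sqr ger0_norm //; lra.
  rewrite h1 h2 ltr_sqrt; last by apply: mulr_gt0; nra.
  have h3 : (M' * dl) ^+ 2 = (dl * M' ^+ 2) * dl by ring.
  rewrite h3.
  have h4 : dl <= 1 - (1 - dl) ^+ 2 by nra.
  have N2 : 0 < N ^+ 2 by exact: exprn_gt0.
  have hP : dl * M' ^+ 2 <= N ^+ 2 / 4 by lra.
  have s1 : dl * M' ^+ 2 * dl <= N ^+ 2 / 4 * dl by apply: ler_wpM2r; lra.
  have s2 : N ^+ 2 * dl <= N ^+ 2 * (1 - (1 - dl) ^+ 2) by apply: ler_wpM2l; lra.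
  have s3 : N ^+ 2 / 4 * dl < N ^+ 2 * dl by nra.
  lra.
Qed.

Unset Implicit Arguments. Set Strict Implicit.

Theorem mainTheorem14 (R : realType) (d : nat) (sigma : 'rV[R]_d)
  (rbar cl cu : R) :
  sigma != 0 -> 0 <= rbar -> 0 <= cl -> cl <= cu -> cu <= 1 -> cl < 1 ->
  ereal_sup [set x : \bar R | exists (rX c : 'rV[R]_d),
      [/\ enorm rX <= rbar, cl <= enorm c <= cu, enorm c != 1,
          dotv rX c != -1 & x = (`|zX sigma rX c|)%:E]]
  = zbarX sigma rbar cl cu.
Proof.
move=> sn0 a0 cl0 lu cu1 cl1.
have Np := enorm_gt0 sn0.
set S := [set x : \bar R | _].
have inS : forall rho t, 0 <= rho -> rho <= rbar -> cl <= t -> t <= cu -> 0 <= t -> t < 1 ->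
   rho * t < 1 -> S (rho * enorm sigma * Num.sqrt (1 - t ^+ 2) / (1 - rho * t))%:E.
  move=> rho t h1 h2 h3 h4 h5 h6 h7.
  have [rX [c [e1 e2 e3 e4 e5]]] := attain sn0 h1 h2 h3 h4 h5 h6 h7.
  by exists rX, c; split => //; rewrite e5.
rewrite /zbarX /=; case: ifP => acu.
- have := clamp_facts rbar lu; rewrite /=.
  set m := Num.max (Num.min rbar cu) cl => -[mcl mcu mcase _].
  have am1 : rbar * m < 1.
    have h : rbar * m <= rbar * cu by apply: ler_pM; lra.
    lra.
  have m1 : m < 1 by case: mcase => [->|[h1 h2]] //; nra.
  apply: le_anti; apply/andP; split.
  + apply: ge_ereal_sup => x [rX [c [h1 /andP[h2 h3] h4 h5 ->]]].
    rewrite lee_fin; exact: ub_fin.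
  + apply: ereal_sup_ubound; apply: inS => //; lra.
- have acu' : 1 <= rbar * cu by rewrite leNgt acu.
  have big : forall M : R, exists x, S x /\ (M%:E < x)%E.
    move=> M.
    have [rho [t [h1 [h2 [h3 [h4 [h5 [h6 [h7 h8]]]]]]]]] :=
      big_inf M Np a0 cl0 lu cu1 cl1 acu'.
    by exists (rho * enorm sigma * Num.sqrt (1 - t ^+ 2) / (1 - rho * t))%:E; split;
      [apply: inS | rewrite lte_fin].
  case E: (ereal_sup S) => [r| |] //.
  + have [x [Sx lt]] := big r.
    have h := ereal_sup_ubound Sx; rewrite E in h.
    by have := lt_le_trans lt h; rewrite ltxx.
  + have [x [Sx lt]] := big 0.
    have h := ereal_sup_ubound Sx; rewrite E in h.
    by have := lt_le_trans lt h.
Qed.
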